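(* Let $X$ be a Dedekind complete vector lattice and let $E,T\in\mathcal{L}^r(X)$ be positive operators such that (i) $E^2=E$, (ii) $ET=TE=T$, and (iii) $E\wedge T=0$ in $\mathcal{L}^r(X)$. Let $Y=E(X)$ with the order inherited from $X$ (a Dedekind complete vector lattice). Then $T$ maps $Y$ into $Y$ and $\mathrm{id}_Y\wedge T|_Y=0$ in $\mathcal{L}^r(Y)$.
   Context: $\mathcal{L}^r(X)$ denotes the space of regular operators (differences of positive operators) on $X$, which is a Dedekind complete vector lattice under the Riesz–Kantorovich formulas when $X$ is Dedekind complete; the same for $\mathcal{L}^r(Y)$. *)

(* Defs.v *)
From HB Require Import structures.
From mathcomp Require Import all_boot all_order all_algebra.
From mathcomp Require Import reals.
Set Implicit Arguments. Unset Strict Implicit. Unset Printing Implicit Defensive.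
Import Order.TTheory GRing.Theory Num.Theory.
Local Open Scope ring_scope.

Section VL.
Variables (R : realType) (X : lmodType R) (le : X -> X -> Prop).

Definition ordered_vector_space : Prop :=
  [/\ (forall x, le x x),
      (forall x y, le x y -> le y x -> x = y),
      (forall x y z, le x y -> le y z -> le x z),
      (forall x y z, le x y -> le (x + z) (y + z)) &
      (forall (a : R) x y, 0 <= a -> le x y -> le (a *: x) (a *: y))].

Definition is_upper_bound (A : X -> Prop) (u : X) := forall a, A a -> le a u.

Definition is_sup (A : X -> Prop) (s : X) :=
  is_upper_bound A s /\ forall u, is_upper_bound A u -> le s u.

Definition vector_lattice : Prop :=
  ordered_vector_space /\
  forall x y, exists s, is_sup (fun z => z = x \/ z = y) s.

Definition dedekind_complete : Prop :=
  forall A : X -> Prop, (exists a, A a) -> (exists u, is_upper_bound A u) ->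
  exists s, is_sup A s.

(* An operator on P is represented by a map S : X -> X mapping P into P and
   linear on P; only its values on P matter. *)
Definition op_on (P : X -> Prop) (S : X -> X) : Prop :=
  [/\ (forall x, P x -> P (S x)),
      (forall x y, P x -> P y -> S (x + y) = S x + S y) &
      (forall (a : R) x, P x -> S (a *: x) = a *: S x)].

Definition positive_on (P : X -> Prop) (S : X -> X) : Prop :=
  op_on P S /\ forall x, P x -> le 0 x -> le 0 (S x).

Definition regular_on (P : X -> Prop) (S : X -> X) : Prop :=
  op_on P S /\ exists S1 S2, [/\ positive_on P S1, positive_on P S2 &
                               forall x, P x -> S x = S1 x - S2 x].

Definition op_le_on (P : X -> Prop) (S S' : X -> X) : Prop :=
  forall x, P x -> le 0 x -> le 0 (S' x - S x).

Definition op_inf_on (P : X -> Prop) (A B C : X -> X) : Prop :=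
  [/\ regular_on P A, regular_on P B & regular_on P C] /\
  [/\ op_le_on P C A, op_le_on P C B &
      forall S, regular_on P S -> op_le_on P S A -> op_le_on P S B ->
        op_le_on P S C].

End VL.

(* Main.v *)
Require Import Defs.
From HB Require Import structures.
From mathcomp Require Import all_boot all_order all_algebra.
From mathcomp Require Import reals.
Import Order.TTheory GRing.Theory Num.Theory.
Local Open Scope ring_scope.

Theorem lemma4p2 (R : realType) (X : lmodType R) (le : X -> X -> Prop)
  (E T : X -> X) :
  vector_lattice le -> dedekind_complete le ->
  positive_on le (fun _ => True) E -> positive_on le (fun _ => True) T ->
  (forall x, E (E x) = E x) ->
  (forall x, E (T x) = T x) -> (forall x, T (E x) = T x) ->
  op_inf_on le (fun _ => True) E T (fun _ => 0) ->
  let Y := fun y : X => exists x, y = E x in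
  (forall y, Y y -> Y (T y)) /\
  op_inf_on le Y (fun y => y) T (fun _ => 0).
Proof.
move=> [[lerefl _ _ _ _] _] _ [[_ EA EZ] Ep] [[_ TA TZ] Tp] EE ET TE [_ [_ _ Hinf]] Y.
have YT : forall y, Y y -> Y (T y).
  by move=> y [x ->]; exists (T (E x)); rewrite ET.
have E0 : E 0 = 0 by have := EZ 0 0 I; rewrite !scale0r.
have opY0 : op_on Y (fun _ => 0).
  split; first by move=> x _; exists 0; rewrite E0.
  - by move=> *; rewrite addr0.
  - by move=> *; rewrite scaler0.
have posY0 : positive_on le Y (fun _ => 0).
  by split => // x _ _; apply: lerefl.
have opYT : op_on Y T by split => [|x y _ _|a x _]; [exact: YT | exact: TA | exact: TZ].
have posYT : positive_on le Y T by split => // x _; exact: Tp.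
have opYid : op_on Y (fun y => y) by split.
split => //; split.
  split.
  - split => //; exists (fun y => y), (fun _ => 0); split => //;
      try (by split => // x _ Hx); by move=> *; rewrite subr0.
  - split => //; exists T, (fun _ => 0); split => //.
    by move=> *; rewrite subr0.
  - split => //; exists (fun _ => 0), (fun _ => 0); split => //.
    by move=> *; rewrite subr0.
split.
- by move=> x _ Hx; rewrite subr0.
- by move=> x _ Hx; rewrite subr0; exact: Tp.
move=> S [[SY SA SZ] [S1 [S2 [[[_ S1A S1Z] S1p] [[_ S2A S2Z] S2p] SD]]]] Sid ST.
have YE : forall x, Y (E x) by move=> x; exists x.
have H' : op_le_on le (fun _ => True) (fun x => S (E x)) (fun _ => 0).
  apply: Hinf.
  - split.
      split; [by [] | by move=> x y _ _; rewrite EA // (SA _ _ (YE x) (YE y))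
             | by move=> a x _; rewrite EZ // (SZ _ _ (YE x))].
    exists (fun x => S1 (E x)), (fun x => S2 (E x)); split.
    + split; first split => //.
      * by move=> x y _ _; rewrite EA // (S1A _ _ (YE x) (YE y)).
      * by move=> a x _; rewrite EZ // (S1Z _ _ (YE x)).
      by move=> x _ Hx; apply: S1p => //; apply: Ep.
    + split; first split => //.
      * by move=> x y _ _; rewrite EA // (S2A _ _ (YE x) (YE y)).
      * by move=> a x _; rewrite EZ // (S2Z _ _ (YE x)).
      by move=> x _ Hx; apply: S2p => //; apply: Ep.
    by move=> x _; rewrite SD.
  - by move=> x _ Hx; apply: Sid => //; apply: Ep.
  - by move=> x _ Hx; rewrite -TE; apply: ST => //; apply: Ep.
move=> y [x ->] Hy.
have := H' (E x) I Hy.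
by rewrite EE.
Qed.
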